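(* Let $d\in\mathbb{N}$. Then there exists a $\left(d+1,\frac{1}{2d}\right)$-secluded unit hypercube partition $\mathcal{P}$ of $\mathbb{R}^{d}$. That is, for every point $\vec{p}\in\mathbb{R}^{d}$, \[\left|\mathcal{N}_{\frac{1}{2d}}(\vec{p})\right|\leq d+1.\]
   Context: $\mathbb{N}$ denotes the positive integers. On $\mathbb{R}^d$ use the metric $d_{max}(\vec{x},\vec{y})=\max_{i\in[d]}|x_i-y_i|$ (the $\ell^\infty$ metric); $\overline{B}_{\epsilon}(\vec{p})=\{\vec{x}\in\mathbb{R}^d: d_{max}(\vec{x},\vec{p})\le\epsilon\}$ is the closed ball. For a partition $\mathcal{P}$ of $\mathbb{R}^d$, $\vec{p}\in\mathbb{R}^d$ and $\epsilon>0$, $\mathcal{N}_{\epsilon}(\vec{p})=\{X\in\mathcal{P}: X\cap\overline{B}_{\epsilon}(\vec{p})\neq\emptyset\}$. A partition $\mathcal{P}$ of $\mathbb{R}^d$ is $(k,\epsilon)$-secluded if $|\mathcal{N}_\epsilon(\vec{p})|\le k$ for every $\vec{p}\in\mathbb{R}^d$. A unit hypercube is a set of the form $\vec{a}+[0,1)^d$ with $\vec{a}\in\mathbb{R}^d$; a unit hypercube partition is a partition of $\mathbb{R}^d$ all of whose members are unit hypercubes. *)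

(* Defs.v *)
From Stdlib Require Import Reals Lra List.
Open Scope R_scope.

Definition pt (d : nat) := {i : nat | (i < d)%nat} -> R.

Definition pset (d : nat) := pt d -> Prop.

Definition closed_ball {d : nat} (eps : R) (p : pt d) : pset d :=
  fun x => forall i, Rabs (x i - p i) <= eps.

Definition is_partition {d : nat} (P : pset d -> Prop) : Prop :=
  (forall X, P X -> exists x, X x) /\
  (forall X Y, P X -> P Y -> X <> Y -> forall x, X x -> Y x -> False) /\
  (forall x, exists X, P X /\ X x).

Definition unit_hypercube {d : nat} (a : pt d) : pset d :=
  fun x => forall i, a i <= x i < a i + 1.

Definition is_unit_hypercube {d : nat} (X : pset d) : Prop :=
  exists a : pt d, X = unit_hypercube a.

Definition unit_hypercube_partition {d : nat} (P : pset d -> Prop) : Prop :=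
  is_partition P /\ forall X, P X -> is_unit_hypercube X.

Definition nbhd_members {d : nat} (P : pset d -> Prop) (eps : R) (p : pt d)
  : pset d -> Prop :=
  fun X => P X /\ exists x, X x /\ closed_ball eps p x.

Definition card_le {d : nat} (S : pset d -> Prop) (k : nat) : Prop :=
  exists L : list (pset d), (length L <= k)%nat /\ forall X, S X -> In X L.

Definition secluded {d : nat} (P : pset d -> Prop) (k : nat) (eps : R) : Prop :=
  forall p : pt d, card_le (nbhd_members P eps p) k.

(* Main.v *)
Require Import Defs.
From Stdlib Require Import Reals.
From Stdlib Require Import Lra Lia Arith List ZArith Classical FunctionalExtensionality PropExtensionality.
Open Scope R_scope.

Fixpoint Tz (n : nat -> Z) (k : nat) : Z :=
  match k with O => 0%Z | S k' => (Tz n k' + Z.of_nat (S k') * n k')%Z end.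

Definition corner (d : nat) (n : nat -> Z) : pt d :=
  fun i => IZR (n (proj1_sig i)) + IZR (Tz n (proj1_sig i)) / INR d.

Definition cubeP (d : nat) : pset d -> Prop :=
  fun X => exists n : nat -> Z, X = unit_hypercube (corner d n).

Lemma Tz_ext n n' k : (forall j, (j < k)%nat -> n j = n' j) -> Tz n k = Tz n' k.
Proof.
  induction k; intros H; simpl; auto.
  rewrite IHk by (intros; apply H; lia). rewrite H by lia. reflexivity.
Qed.

Lemma corner_ext d n n' : (forall j, (j < d)%nat -> n j = n' j) -> corner d n = corner d n'.
Proof.
  intros H. apply functional_extensionality. intros [i hi]. unfold corner; simpl.
  rewrite H by exact hi. rewrite (Tz_ext n n' i) by (intros; apply H; lia). reflexivity.
Qed.

Lemma key (d : nat) (n n' : nat -> Z) :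
  (forall k, (k < d)%nat ->
     (- Z.of_nat d <= Z.of_nat d * (n' k - n k) + (Tz n' k - Tz n k) <= Z.of_nat d)%Z) ->
  forall k, (k <= d)%nat ->
   (- Z.of_nat k <= Tz n' k - Tz n k <= Z.of_nat k)%Z /\
   (Tz n' k = Tz n k -> forall j, (j < k)%nat -> n' j = n j).
Proof.
  intros H. induction k; intros hk.
  - simpl. split; [lia|]. intros _ j hj; lia.
  - destruct IHk as [IH1 IH2]; [lia|].
    specialize (H k ltac:(lia)).
    cbn [Tz].
    set (D := (Tz n' k - Tz n k)%Z) in *.
    set (m := (n' k - n k)%Z) in *.
    assert (Hm : (m = -1 \/ m = 0 \/ m = 1)%Z) by nia.
    assert (Hs1 : (m = 1 -> D <= 0)%Z) by (intros ->; lia).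
    assert (Hs2 : (m = -1 -> D >= 0)%Z) by (intros ->; lia).
    assert (E : (Tz n' k + Z.of_nat (S k) * n' k - (Tz n k + Z.of_nat (S k) * n k)
                 = D + Z.of_nat (S k) * m)%Z) by (unfold D, m; ring).
    split.
    + rewrite E. destruct Hm as [-> | [-> | ->]]; lia.
    + intros Heq. assert (E0 : (D + Z.of_nat (S k) * m = 0)%Z) by lia.
      assert (m = 0%Z) by (destruct Hm as [-> | [-> | ->]]; lia).
      assert (D = 0%Z) by lia.
      intros j hj. destruct (Nat.eq_dec j k) as [->|hne].
      * unfold m in *; lia.
      * apply IH2; [unfold D in *; lia | lia].
Qed.

Definition flo (r : R) : Z := (up r - 1)%Z.
Lemma flo_spec r : IZR (flo r) <= r < IZR (flo r) + 1.
Proof. unfold flo. rewrite minus_IZR. destruct (archimed r). lra. Qed.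

Lemma Rabs_b u e : Rabs u <= e -> - e <= u <= e.
Proof. unfold Rabs; destruct (Rcase_abs u); lra. Qed.


Definition Mem d (p : pt d) (n : nat -> Z) :=
  exists x, unit_hypercube (corner d n) x /\ closed_ball (1 / (2 * INR d)) p x.

Lemma mem_close d p n n' : (1 <= d)%nat -> Mem d p n -> Mem d p n' ->
  forall k, (k < d)%nat ->
     (- Z.of_nat d <= Z.of_nat d * (n' k - n k) + (Tz n' k - Tz n k) <= Z.of_nat d)%Z.
Proof.
  intros hd [x [Hx Bx]] [x' [Hx' Bx']] k hk.
  assert (Hd : 0 < INR d) by (apply lt_0_INR; lia).
  specialize (Hx (exist _ k hk)). specialize (Hx' (exist _ k hk)).
  specialize (Bx (exist _ k hk)). specialize (Bx' (exist _ k hk)).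
  apply Rabs_b in Bx, Bx'.
  unfold corner in Hx, Hx'; simpl in Hx, Hx'.
  set (e := 1 / (2 * INR d)) in *.
  assert (He : 2 * INR d * e = 1) by (unfold e; field; lra).
  set (c := IZR (n k) + IZR (Tz n k) / INR d) in *.
  set (c' := IZR (n' k) + IZR (Tz n' k) / INR d) in *.
  assert (h1 : c' - c < 1 + 2 * e) by lra.
  assert (h2 : c - c' < 1 + 2 * e) by lra.
  set (z := (Z.of_nat d * (n' k - n k) + (Tz n' k - Tz n k))%Z).
  assert (Ez : IZR z = INR d * (c' - c)).
  { unfold z, c, c'. rewrite plus_IZR, mult_IZR, !minus_IZR, <- INR_IZR_INZ. field. lra. }
  assert (A1 : IZR z < INR d + 1).
  { rewrite Ez. assert (INR d * (c' - c) < INR d * (1 + 2 * e)) by (apply Rmult_lt_compat_l; lra). nra. }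
  assert (A2 : - (INR d + 1) < IZR z).
  { rewrite Ez. assert (INR d * (c - c') < INR d * (1 + 2 * e)) by (apply Rmult_lt_compat_l; lra). nra. }
  rewrite INR_IZR_INZ in A1, A2. rewrite <- plus_IZR in A1. rewrite <- plus_IZR, <- opp_IZR in A2.
  apply lt_IZR in A1, A2. fold z. lia.
Qed.

Lemma nat_min (Q : nat -> Prop) n : Q n -> exists m, Q m /\ forall k, Q k -> (m <= k)%nat.
Proof.
  revert Q. induction n; intros Q Hq.
  - exists 0%nat. split; auto. intros; lia.
  - destruct (classic (Q 0%nat)) as [H0|H0].
    + exists 0%nat. split; auto. intros; lia.
    + destruct (IHn (fun k => Q (S k)) Hq) as [m [Hm1 Hm2]].
      exists (S m). split; auto. intros [|k] Hk; [contradiction|]. specialize (Hm2 k Hk). lia.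
Qed.

Lemma seclu d : (1 <= d)%nat -> secluded (cubeP d) (S d) (1 / (2 * INR d)).
Proof.
  intros hd p.
  assert (Hkey : forall n n', Mem d p n -> Mem d p n' ->
     (- Z.of_nat d <= Tz n' d - Tz n d <= Z.of_nat d)%Z /\
     (Tz n' d = Tz n d -> forall j, (j < d)%nat -> n' j = n j)).
  { intros n n' H1 H2. apply (key d n n'); [|lia]. apply (mem_close d p); auto. }
  assert (Hmem : forall X, nbhd_members (cubeP d) (1 / (2 * INR d)) p X ->
            exists n, X = unit_hypercube (corner d n) /\ Mem d p n).
  { intros X [[n ->] Hx]. exists n. split; auto. }
  destruct (classic (exists n, Mem d p n)) as [[n0 H0]|Hno].
  2:{ exists nil. split; [simpl; lia|]. intros X HX. destruct (Hmem X HX) as [n [_ Hn]].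
      exfalso. apply Hno. eauto. }
  set (Q := fun k => exists n, Mem d p n /\ Tz n d = (Tz n0 d - Z.of_nat d + Z.of_nat k)%Z).
  destruct (nat_min Q d) as [k0 [[n1 [Hn1 E1]] Hmin]].
  { exists n0. split; auto. lia. }
  set (s := (Tz n0 d - Z.of_nat d + Z.of_nat k0)%Z).
  set (g := fun t : Z => (fun x : pt d => exists n, Mem d p n /\ Tz n d = t /\ unit_hypercube (corner d n) x)).
  exists (map (fun k => g (s + Z.of_nat k)%Z) (seq 0 (S d))).
  split. { rewrite length_map, length_seq. lia. }
  intros X HX. destruct (Hmem X HX) as [n [-> Hn]].
  assert (Lo : (s <= Tz n d)%Z).
  { destruct (Hkey n0 n H0 Hn) as [B _].
    assert (Q (Z.to_nat (Tz n d - (Tz n0 d - Z.of_nat d)))).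
    { exists n. split; auto. rewrite Z2Nat.id; lia. }
    specialize (Hmin _ H). unfold s. lia. }
  assert (Hi : (Tz n d <= s + Z.of_nat d)%Z).
  { destruct (Hkey n1 n Hn1 Hn) as [B _]. unfold s. lia. }
  apply in_map_iff. exists (Z.to_nat (Tz n d - s)). split.
  2:{ apply in_seq. lia. }
  rewrite Z2Nat.id by lia. replace (s + (Tz n d - s))%Z with (Tz n d) by ring.
  unfold g. apply functional_extensionality. intros x. apply propositional_extensionality.
  split.
  - intros [n' [Hn' [Et Hx]]].
    assert (Ec : corner d n' = corner d n).
    { apply corner_ext. destruct (Hkey n n' Hn Hn') as [_ C]. apply C. auto. }
    rewrite <- Ec. exact Hx.
  - intros Hx. exists n. auto.
Qed.

Theorem mainTheorem1 (d : nat) (hd : (1 <= d)%nat) :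
  exists P : pset d -> Prop,
    unit_hypercube_partition P /\
    secluded P (S d) (1 / (2 * INR d)).
Proof.
  assert (Hd : 0 < INR d) by (apply lt_0_INR; lia).
  exists (cubeP d). split; [split|].
  - split; [|split].
    + intros X [n ->]. exists (corner d n). intros i. lra.
    + intros X Y [n ->] [n' ->] hne x Hx Hy. apply hne. f_equal.
      apply corner_ext.
      assert (forall k, (k <= d)%nat -> forall j, (j < k)%nat -> n j = n' j).
      { induction k; intros hk j hj; [lia|].
        destruct (Nat.eq_dec j k) as [->|hne2]; [|apply IHk; lia].
        pose proof (Tz_ext n n' k (IHk ltac:(lia))) as ET.
        specialize (Hx (exist _ k hk)). specialize (Hy (exist _ k hk)).
        unfold corner in Hx, Hy; simpl in Hx, Hy. rewrite ET in Hx.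
        assert (A1 : IZR (n k) < IZR (n' k) + 1) by lra.
        assert (A2 : IZR (n' k) < IZR (n k) + 1) by lra.
        rewrite <- plus_IZR in A1, A2. apply lt_IZR in A1, A2. lia. }
      intros j hj. apply (H d); lia.
    + intros x.
      set (xe := fun k => match lt_dec k d with left h => x (exist _ k h) | right _ => 0 end).
      set (f := fun k T => flo (xe k - IZR T / INR d)).
      set (Tc := fix Tc k := match k with O => 0%Z | S k' => (Tc k' + Z.of_nat (S k') * f k' (Tc k'))%Z end).
      set (nc := fun k => f k (Tc k)).
      assert (ET : forall k, Tz nc k = Tc k).
      { induction k; simpl; auto. rewrite IHk. reflexivity. }
      exists (unit_hypercube (corner d nc)). split; [exists nc; reflexivity|].
      intros [k hk]. unfold corner; simpl. rewrite ET.
      assert (Ex : xe k = x (exist _ k hk)).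
      { unfold xe. destruct (lt_dec k d) as [h|h]; [|lia].
        f_equal. f_equal. apply proof_irrelevance. }
      unfold nc. pose proof (flo_spec (xe k - IZR (Tc k) / INR d)) as Hf.
      fold (f k (Tc k)) in Hf. rewrite Ex in Hf. lra.
  - intros X [n ->]. exists (corner d n). reflexivity.
  - apply seclu; exact hd.
Qed.
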